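(* Let $G$ be a finite nonabelian simple group, let $G\le S_n$ be a faithful permutation representation of minimum degree, and let $k\ge1$, $\Omega=\overline G^k\subseteq\{0,1\}^{kn^2}$. Let $Q=\{(g_1,\dots,g_{2k})\in G^{2k}:g_1=g_{2k}=1\}$, acting on the variables by $M_{i,a,b}\mapsto M_{i,g_{2i-1}(a),g_{2i}(b)}$ (so $M_i\mapsto\overline{g_{2i-1}}M_i\overline{g_{2i}}^{-1}$). Suppose $H=\mathrm{Stab}_Q(\chi|_\Omega)$ for some coordinate function $\chi(x)=M_{i,a,b}$. Then $\mu(H,K)\le1$ for every $K$ with $H\le K\le Q$ and $K\in\mathcal N_{Q,\Omega}$.
   Context: $\overline G$ is the set of permutation matrices of elements of $G$. For $f$ on $\Omega$, $\mathrm{Stab}_Q(f)=\{\pi\in Q:f(\pi x)=f(x)\ \forall x\in\Omega\}$, and $\mathcal N_{Q,\Omega}$ is the set of $\mathrm{Stab}_Q(f)$ for $f:\Omega\to\mathbb N$. For $H\le Q\le G^{2k}$ and $S\subseteq[2k]$, $H{\upharpoonright}_S=\{(h_j)_{j\in S}: h\in H,\ h_j=1\ \forall j\notin S\}\le G^S$. $\mathrm{Diag}(G^{\{2i,2i+1\}})=\{(g,g)\}$. Let $E(H)=\{\{i,i+1\}: i\in[k-1],\ H{\upharpoonright}_{\{2i,2i+1\}}=\mathrm{Diag}(G^{\{2i,2i+1\}})\}$. For $H\le K\le Q$ with $K\in\mathcal N_{Q,\Omega}$, $\mu(H,K)$ is the number of vertices of a largest connected component of the graph $([k],E(H)\cap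 E(K))$, except that $\mu(H,Q)=0$. *)

(* Defs.v *)
From HB Require Import structures.
From mathcomp Require Import all_boot all_fingroup all_solvable.
From mathcomp Require Import zify.

Unset Printing Implicit Defensive.

Local Open Scope group_scope.

(* Coordinates of G^{2k} are indexed by 'I_(2*k), 0-indexed:
   paper's g_j (1 <= j <= 2k) is coordinate j-1. Blocks M_i (paper i in [k])
   are indexed by i : 'I_k (paper i-1). *)

Lemma oL_proof {k} (i : 'I_k) : 2 * i < 2 * k.
Proof. have := ltn_ord i; lia. Qed.
Lemma oR_proof {k} (i : 'I_k) : 2 * i + 1 < 2 * k.
Proof. have := ltn_ord i; lia. Qed.

Definition oL {k} (i : 'I_k) : 'I_(2 * k) := Ordinal (oL_proof i).
Definition oR {k} (i : 'I_k) : 'I_(2 * k) := Ordinal (oR_proof i).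

Definition tup (n k : nat) := {ffun 'I_(2 * k) -> {perm 'I_n}}.
(* points of {0,1}^{k n^2}: x (i,a,b) = value of the variable M_{i,a,b} *)
Definition pt (n k : nat) := {ffun 'I_k * 'I_n * 'I_n -> bool}.

(* Omega = \overline G ^ k : k-tuples of permutation matrices of elements of G,
   with \overline g _{a,b} = 1 iff g a = b. *)
Definition Omega {n} (G : {group {perm 'I_n}}) (k : nat) : {set pt n k} :=
  [set x : pt n k | [forall i : 'I_k, [exists g in G,
      [forall a : 'I_n, [forall b : 'I_n, x (i, a, b) == (g a == b)]]]]].

Definition QQ {n} (G : {group {perm 'I_n}}) (k : nat) : {set tup n k} :=
  [set h : tup n k | [forall j, h j \in G] &&
     [forall j : 'I_(2 * k), ((val j == 0) || (val j == (2 * k).-1)) ==> (h j == 1)]].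

Definition act {n k} (h : tup n k) (x : pt n k) : pt n k :=
  [ffun v : 'I_k * 'I_n * 'I_n =>
     x (v.1.1, h (oL v.1.1) v.1.2, h (oR v.1.1) v.2)].

(* Stab_Q(f) for f : Omega -> nat (values of f outside Omega are irrelevant) *)
Definition Stab {n} (G : {group {perm 'I_n}}) (k : nat) (f : pt n k -> nat) : {set tup n k} :=
  [set h in QQ G k | [forall x in Omega G k, f (act h x) == f x]].

Definition inN {n} (G : {group {perm 'I_n}}) {k : nat} (K : {set tup n k}) : Prop :=
  exists f : pt n k -> nat, K = Stab G k f.

Definition chi {n k} (i : 'I_k) (a b : 'I_n) (x : pt n k) : nat := x (i, a, b).

(* H|_{{p,q}} <= G^{{p,q}}, written as a set of pairs (h_p, h_q) *)
Definition restr2 {n k} (H : {set tup n k}) (p q : 'I_(2 * k))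
  : {set {perm 'I_n} * {perm 'I_n}} :=
  [set ((h : tup n k) p, (h : tup n k) q) | h in [set h : tup n k in H |
      [forall j : 'I_(2 * k), ((j != p) && (j != q)) ==> (h j == 1)]]].

Definition diag2 {n} (G : {group {perm 'I_n}}) : {set {perm 'I_n} * {perm 'I_n}} :=
  [set (g, g) | g in G].

(* {i, j} in E(H), for j = i+1 (0-indexed blocks): the paper's pair of
   coordinates {2i', 2i'+1} (1-indexed, i' = i+1) is (oR i, oL j). *)
Definition Eedge {n k} (G : {group {perm 'I_n}}) (H : {set tup n k}) (i j : 'I_k) : bool :=
  (val j == (val i).+1) && (restr2 H (oR i) (oL j) == diag2 G).

Definition adjHK {n k} (G : {group {perm 'I_n}}) (H K : {set tup n k}) : rel 'I_k :=
  fun i j => (Eedge G H i j && Eedge G K i j) || (Eedge G H j i && Eedge G K j i).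

Definition mu {n k} (G : {group {perm 'I_n}}) (H K : {set tup n k}) : nat :=
  if K == QQ G k then 0
  else \max_(v : 'I_k) #|[set w | connect (adjHK G H K) v w]|.

(* Main.v *)
Require Import Defs.
From HB Require Import structures.
From mathcomp Require Import all_boot all_fingroup all_solvable.
From mathcomp Require Import zify.

Local Open Scope group_scope.

Lemma noE n k (G : {group {perm 'I_n}}) (i : 'I_k) (a b : 'I_n) (j j' : 'I_k) g :
  g \in G -> g != 1 -> Eedge G (Stab G k (chi i a b)) j j' = false.
Proof.
move=> gG g1; apply/negbTE/negP; case/andP => /eqP hj' /eqP E.
pose c : 'I_(2 * k) := if val j == val i then oL j' else oR j.
pose h : tup n k := [ffun t => if t == c then g else 1].
have cneq : (c != oL i) && (c != oR i).
  rewrite /c; case: ifP => /eqP Hji; apply/andP; split; apply/eqP;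
  move/(congr1 val) => /=; move: Hji hj'; simpl; lia.
have cb : (val c != 0) && (val c != (2 * k).-1).
  have := ltn_ord j'; rewrite /c; case: ifP => _ Hk; apply/andP; split; apply/eqP;
  move: Hk hj'; simpl; lia.
have pq : oR j != oL j' by apply/eqP => /(congr1 val); move: hj'; simpl; lia.
have hin : h \in [set h : tup n k in Stab G k (chi i a b) |
      [forall t : 'I_(2 * k), ((t != oR j) && (t != oL j')) ==> (h t == 1)]].
  rewrite inE; apply/andP; split.
    rewrite /Stab inE; apply/andP; split.
      rewrite /QQ inE; apply/andP; split.
        by apply/forallP => t; rewrite ffunE; case: ifP.
      apply/forallP => t; apply/implyP => Ht; rewrite ffunE.
      case: ifP => // /eqP Htc; subst t; case/andP: cb => c0 c1.
      by case/orP: Ht => /eqP Ht; rewrite Ht eqxx in c0 c1.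
    apply/forallP => x; apply/implyP => _.
    case/andP: cneq => c1 c2.
    by rewrite /chi /act ffunE /= !ffunE (eq_sym (oL i)) (negbTE c1) (eq_sym (oR i)) (negbTE c2) !perm1.
  apply/forallP => t; apply/implyP => /andP [t1 t2]; rewrite ffunE.
  case: ifP => // /eqP Htc; subst t; move: t1 t2; rewrite /c; by case: ifP => _; rewrite eqxx.
have : (h (oR j), h (oL j')) \in restr2 (Stab G k (chi i a b)) (oR j) (oL j').
  by apply/imsetP; exists h.
rewrite E => /imsetP [g' _ [e1 e2]].
move: e1 e2; rewrite !ffunE /c; case: (val j == val i);
  rewrite ?eqxx ?(negbTE pq) ?(eq_sym (oL j') (oR j)) ?(negbTE pq) => e1 e2; move: g1;
  first [by rewrite e1 -e2 eqxx | by rewrite e2 -e1 eqxx].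
Qed.

Theorem lemma6p9 (n k : nat) (G : {group {perm 'I_n}}) :
  simple G -> ~~ abelian G ->
  (* G <= S_n is a faithful permutation representation of minimum degree *)
  (forall (m : nat) (f : {morphism G >-> {perm 'I_m}}), ('injm f)%g -> n <= m) ->
  0 < k ->
  forall (i : 'I_k) (a b : 'I_n) (H : {set tup n k}),
  H = Stab G k (chi i a b) ->
  forall K : {set tup n k},
  H \subset K -> K \subset QQ G k -> inN G K ->
  mu G H K <= 1.
Proof.
move=> _ nab _ _ i a b H -> K _ _ _.
have : G :!=: 1 by apply: contraNneq nab => ->; exact: abelian1.
case/trivgPn => g gG g1.
rewrite /mu; case: ifP => // _.
apply/bigmax_leqP => v _.
rewrite -(cards1 v); apply: subset_leq_card; apply/subsetP => w.
rewrite inE => /connectP [p pth ->]; case: p pth => [|x p] /=; first by rewrite inE.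
by rewrite /adjHK !(@noE n k G i a b _ _ g gG g1).
Qed.
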